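(* Consider an $(N+1)$-party resource with parties $\mathcal{A}|\mathcal{X}$ and $\mathcal{B}_1|\mathcal{Y}_1,\dots,\mathcal{B}_N|\mathcal{Y}_N$, and write $\overline{\mathcal{B}}=\mathcal{B}_1\otimes\cdots\otimes\mathcal{B}_N$, $\overline{\mathcal{Y}}=\mathcal{Y}_1\otimes\cdots\otimes\mathcal{Y}_N$. Suppose the party $\mathcal{A}|\mathcal{X}$ is classical, i.e. $(\mathsf{T}[\mathcal{A}],\mathsf{T}[\mathcal{X}])\in\{(\mathsf{C},\mathsf{C}),(\mathsf{I},\mathsf{C}),(\mathsf{C},\mathsf{I}),(\mathsf{I},\mathsf{I})\}$, and the set $\mathbf{J}^{\mathrm{free}}_{\overline{\mathcal{B}}|\overline{\mathcal{Y}}}$ of Choi matrices of free $N$-party resources on the parties $\mathcal{B}_k|\mathcal{Y}_k$ is LP-representable. Then the set $\mathbf{J}^{\mathrm{free}}_{\mathcal{A}\overline{\mathcal{B}}|\mathcal{X}\overline{\mathcal{Y}}}$ of Choi matrices of free $(N+1)$-party resources is also LP-representable.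
   Context: Systems have a dimension and a type in $\{\mathsf{I},\mathsf{C},\mathsf{Q}\}$ (trivial = dimension 1, classical, quantum). A multipartite resource is a completely positive linear map from operators on the tensor product of all parties' inputs to operators on the tensor product of all parties' outputs, trace preserving on product inputs, nonsignaling from every party to every other, and satisfying classicality constraints (for a classical output, off-diagonal matrix elements in the computational basis vanish; for a classical input $\mathcal{X}$, the map vanishes on $|i\rangle\langle j|\otimes(\cdot)$ for $i\ne j$). A multipartite resource is free (LOSR-free) if it is a convex combination of tensor products of single-party channels, one per party, of the appropriate types. Choi matrices are $J_R=(R\otimes\mathrm{id})[\bigotimes_k\phi_{\mathcal{X}_k\mathcal{X}_k'}]$ with $\phi$ normalized maximally entangled states. A set $\mathbf{X}\subseteq\mathbb{R}^n$ is LP-representable if $\mathbf{X}=\{x:\exists y,\ c+Px+Qy\ge0\text{ componentwise}\}$ (Hermitian matrices expanded in a real basis). *)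

(* Defs.v *)
From HB Require Import structures.
From mathcomp Require Import all_boot all_order all_algebra.
From mathcomp Require Import reals complex.
Set Implicit Arguments. Unset Strict Implicit. Unset Printing Implicit Defensive.
Import Order.TTheory GRing.Theory Num.Theory.
Local Open Scope ring_scope.

(* System types: trivial, classical, quantum *)
Inductive systype := TI | TC | TQ.
Record system := Sys { styp : systype; sdim : nat }.
Definition valid_system (s : system) : Prop :=
  (0 < sdim s)%N /\ (styp s = TI -> sdim s = 1%N).
(* a party  A|X : output system A, input system X *)
Record party := Party { pout : system; pin : system }.
Definition valid_party (q : party) : Prop := valid_system (pout q) /\ valid_system (pin q).

Section Defs.
Variable R : realType.
Local Notation C := (complex R).

Definition mat (T : finType) := T -> T -> C.
Definition hermitian (T : finType) (M : mat T) : Prop := forall i j, M j i = (M i j)^*.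
Definition psd (T : finType) (M : mat T) : Prop :=
  forall v : T -> C, 0 <= \sum_i \sum_j (v i)^* * M i j * v j.
Definition trace (T : finType) (M : mat T) : C := \sum_i M i i.
Definition density (T : finType) (M : mat T) : Prop := psd M /\ trace M = 1.

(* a linear map from operators on In to operators on Out, given by its values
   on the matrix units: K i j a b = <a| K(|i><j|) |b> *)
Definition superop (In Out : finType) := In -> In -> Out -> Out -> C.
Definition apply (In Out : finType) (K : superop In Out) (M : mat In) : mat Out :=
  fun a b => \sum_i \sum_j M i j * K i j a b.
Definition ampl (In Out : finType) (n : nat) (K : superop In Out)
  : superop (In * 'I_n)%type (Out * 'I_n)%type :=
  fun i j a b => K i.1 j.1 a.1 b.1 * ((i.2 == a.2) && (j.2 == b.2))%:R.
Definition cp (In Out : finType) (K : superop In Out) : Prop :=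
  forall (n : nat) (M : mat (In * 'I_n)%type), psd M -> psd (apply (@ampl _ _ n K) M).

(* multi-indices: computational basis of a tensor product of spaces of dims d k *)
Definition idx (P : finType) (d : P -> nat) := {dffun forall k : P, 'I_(d k)}.
Definition tens (P : finType) (d : P -> nat) (M : forall k, mat 'I_(d k)) : mat (idx d) :=
  fun i j => \prod_k M k (i k) (j k).
Definition tens_so (P : finType) (dI dO : P -> nat)
  (E : forall k, superop 'I_(dI k) 'I_(dO k)) : superop (idx dI) (idx dO) :=
  fun i j a b => \prod_k E k (i k) (j k) (a k) (b k).
Definition upd (P : finType) (d : P -> nat) (a : idx d) (k : P) (x : 'I_(d k)) : idx d :=
  [ffun j => @dfwith P (fun j => 'I_(d j)) (fun j => a j) k x j].
(* partial trace over the k-th tensor factor (tensored with the identity on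
   that factor; equality of these is equality of partial traces) *)
Definition ptr (P : finType) (d : P -> nat) (k : P) (M : mat (idx d)) : mat (idx d) :=
  fun a b => \sum_(x : 'I_(d k)) M (upd a x) (upd b x).

Section Parties.
Variables (P : finType) (p : P -> party).
Definition dI (k : P) : nat := sdim (pin (p k)).
Definition dO (k : P) : nat := sdim (pout (p k)).

Definition tp_product (K : superop (idx dI) (idx dO)) : Prop :=
  forall s : forall k, mat 'I_(dI k), (forall k, density (s k)) ->
    trace (apply K (tens s)) = 1.
Definition nonsignaling (K : superop (idx dI) (idx dO)) : Prop :=
  forall (k : P) (s s' : forall k, mat 'I_(dI k)),
    (forall j, j != k -> s j = s' j) -> density (s k) -> density (s' k) ->
    ptr k (apply K (tens s)) = ptr k (apply K (tens s')).
Definition classical_out (k : P) (K : superop (idx dI) (idx dO)) : Prop :=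
  forall (M : mat (idx dI)) (a b : idx dO), a k != b k -> apply K M a b = 0.
Definition classical_in (k : P) (K : superop (idx dI) (idx dO)) : Prop :=
  forall M : mat (idx dI), (forall i j : idx dI, i k = j k -> M i j = 0) ->
    forall a b, apply K M a b = 0.
Definition resource (K : superop (idx dI) (idx dO)) : Prop :=
  [/\ cp K, tp_product K, nonsignaling K &
      forall k, (styp (pout (p k)) = TC -> classical_out k K) /\
                (styp (pin (p k)) = TC -> classical_in k K)].
End Parties.

Definition channel (q : party) (E : superop 'I_(sdim (pin q)) 'I_(sdim (pout q))) : Prop :=
  [/\ cp E,
      forall rho, density rho -> trace (apply E rho) = 1,
      styp (pout q) = TC -> forall M a b, a != b -> apply E M a b = 0 &
      styp (pin q) = TC -> forall M, (forall i j, i = j -> M i j = 0) ->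
        forall a b, apply E M a b = 0].

(* LOSR-free: finite convex combination of tensor products of single-party channels *)
Definition free (P : finType) (p : P -> party) (K : superop (idx (dI p)) (idx (dO p))) : Prop :=
  exists (n : nat) (w : 'I_n -> R) (E : 'I_n -> forall k, superop 'I_(dI p k) 'I_(dO p k)),
    [/\ forall l, 0 <= w l, \sum_l w l = 1,
        forall l k, channel (q := p k) (E l k) &
        K = fun i j a b => \sum_l ((w l)%:C)%C * tens_so (E l) i j a b].

(* Choi matrix (K ⊗ id)[⊗_k φ_{X_k X_k'}], φ normalized maximally entangled;
   basis of output ⊗ copy of input *)
Definition choi (P : finType) (p : P -> party) (K : superop (idx (dI p)) (idx (dO p)))
  : mat (idx (dO p) * idx (dI p))%type :=
  fun x y => K x.2 y.2 x.1 y.1 / (\prod_k (dI p k))%:R.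

Definition Jfree (P : finType) (p : P -> party) : mat (idx (dO p) * idx (dI p))%type -> Prop :=
  fun J => exists K, free (p := p) K /\ J = choi (p := p) K.

Definition coords (T : finType) (M : mat T) : (T * T * bool)%type -> R :=
  fun x => if x.2 then complex.Re (M x.1.1 x.1.2) else complex.Im (M x.1.1 x.1.2).

Definition LP_rep (T : finType) (S : mat T -> Prop) : Prop :=
  exists (m q : nat) (c : 'I_m -> R) (Pm : 'I_m -> (T * T * bool)%type -> R) (Qm : 'I_m -> 'I_q -> R),
    forall M : mat T, S M <->
      (hermitian M /\ exists y : 'I_q -> R,
         forall r, 0 <= c r + \sum_x Pm r x * coords M x + \sum_j Qm r j * y j).
End Defs.

(* Main.v *)
Require Import Defs.
From HB Require Import structures.
From mathcomp Require Import all_boot all_order all_algebra.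
From mathcomp Require Import reals complex.
From Stdlib Require Import ClassicalEpsilon.
From mathcomp Require Import ring lra.
From Stdlib Require Import FunctionalExtensionality.
Set Implicit Arguments. Unset Strict Implicit. Unset Printing Implicit Defensive.
Import Order.TTheory GRing.Theory Num.Theory.
Local Open Scope ring_scope.
Section LP.
Variable R : realType.

Lemma fchoice (A : Type) (B : A -> Type) (P : forall a, B a -> Prop) :
  (forall a, exists b, P a b) -> exists f : forall a, B a, forall a, P a (f a).
Proof.
move=> H; exists (fun a => proj1_sig (constructive_indefinite_description _ (H a))).
by move=> a; exact: (proj2_sig (constructive_indefinite_description _ (H a))).
Qed.

Definition affine (W : finType) (h : (W -> R) -> R) :=
  exists (c : R) (a : W -> R), forall z, h z = c + \sum_w a w * z w.

Lemma affine_cst (W : finType) (k : R) : affine (fun _ : W -> R => k).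
Proof.
by exists k, (fun _ => 0) => z; rewrite big1 ?addr0 // => w _; rewrite mul0r.
Qed.

Lemma affine_var (W : finType) (w0 : W) : affine (fun z => z w0).
Proof.
exists 0, (fun w => (w == w0)%:R) => z; rewrite add0r (bigD1 w0) //= eqxx mul1r.
by rewrite big1 ?addr0 // => w /negbTE ->; rewrite mul0r.
Qed.

Lemma affineD (W : finType) h1 h2 : affine h1 -> affine h2 ->
  affine (fun z : W -> R => h1 z + h2 z).
Proof.
move=> [c1 [a1 H1]] [c2 [a2 H2]]; exists (c1 + c2), (fun w => a1 w + a2 w) => z.
rewrite H1 H2; under [X in _ = _ + X]eq_bigr do rewrite mulrDl.
by rewrite big_split /= addrACA.
Qed.

Lemma affineZ (W : finType) (k : R) h : affine h -> affine (fun z : W -> R => k * h z).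
Proof.
move=> [c [a H]]; exists (k * c), (fun w => k * a w) => z.
rewrite H mulrDr big_distrr /=; congr (_ + _); apply eq_bigr => w _; by rewrite mulrA.
Qed.

Lemma affine_ext (W : finType) (h1 h2 : (W -> R) -> R) :
  (forall z, h1 z = h2 z) -> affine h1 -> affine h2.
Proof. by move=> E [c [a H]]; exists c, a => z; rewrite -E H. Qed.

Lemma affineN (W : finType) h : affine h -> affine (fun z : W -> R => - h z).
Proof. by move=> /(affineZ (-1)); apply: affine_ext => z; rewrite mulN1r. Qed.

Lemma affineB (W : finType) h1 h2 : affine h1 -> affine h2 ->
  affine (fun z : W -> R => h1 z - h2 z).
Proof. by move=> H1 H2; apply: affineD => //; apply: affineN. Qed.

Lemma affine_sum (W I : finType) (h : I -> (W -> R) -> R) :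
  (forall i, affine (h i)) -> affine (fun z => \sum_i h i z).
Proof.
move=> H.
have [ca Hca] := @fchoice I (fun _ => (R * (W -> R))%type)
  (fun i p => forall z, h i z = p.1 + \sum_w p.2 w * z w)
  (fun i => let: ex_intro c (ex_intro a Ha) := H i in ex_intro _ (c, a) Ha).
exists (\sum_i (ca i).1), (fun w => \sum_i (ca i).2 w) => z.
rewrite (eq_bigr _ (fun i _ => Hca i z)) big_split /=; congr (_ + _).
rewrite exchange_big /=; apply eq_bigr => w _; by rewrite mulr_suml.
Qed.

Definition LPdef (W : finType) (Phi : (W -> R) -> Prop) :=
  exists (Rw : finType) (h : Rw -> (W -> R) -> R),
    (forall r, affine (h r)) /\ forall z, Phi z <-> forall r, 0 <= h r z.

Lemma LPdef_ext (W : finType) (Phi Psi : (W -> R) -> Prop) :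
  (forall z, Phi z <-> Psi z) -> LPdef Phi -> LPdef Psi.
Proof.
move=> E [Rw [h [Ha H]]]; exists Rw, h; split => // z; rewrite -E; exact: H.
Qed.

Lemma LPdef_ge (W : finType) h : affine h -> LPdef (fun z : W -> R => 0 <= h z).
Proof.
move=> Ha; exists unit, (fun _ => h); split => // z; split => [H _|H] //; exact: H tt.
Qed.

Lemma LPdef_eq (W : finType) h1 h2 : affine h1 -> affine h2 ->
  LPdef (fun z : W -> R => h1 z = h2 z).
Proof.
move=> H1 H2; exists bool, (fun b z => if b then h1 z - h2 z else h2 z - h1 z); split.
  by case; apply: affineB.
move=> z; split => [-> [] |H]; rewrite ?subrr //.
have := H true; have := H false; rewrite !subr_ge0 => a b.
by apply/eqP; rewrite eq_le a b.
Qed.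

Lemma LPdef_and (W : finType) (Phi Psi : (W -> R) -> Prop) :
  LPdef Phi -> LPdef Psi -> LPdef (fun z => Phi z /\ Psi z).
Proof.
move=> [R1 [h1 [Ha1 H1]]] [R2 [h2 [Ha2 H2]]].
exists (R1 + R2)%type, (fun r => match r with inl r1 => h1 r1 | inr r2 => h2 r2 end).
split; first by case.
move=> z; rewrite H1 H2; split => [[A B] [r|r]|H]; [exact: A|exact: B|].
by split => r; [exact: (H (inl r))|exact: (H (inr r))].
Qed.

Lemma LPdef_all (W I : finType) (Phi : I -> (W -> R) -> Prop) :
  (forall i, LPdef (Phi i)) -> LPdef (fun z => forall i, Phi i z).
Proof.
move=> H.
have [s Hs] := @fchoice I (fun _ => {Rw : finType & Rw -> (W -> R) -> R})
  (fun i s => (forall r, affine (projT2 s r)) /\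
              forall z, Phi i z <-> forall r, 0 <= projT2 s r z)
  (fun i => let: ex_intro Rw (ex_intro h Hh) := H i in ex_intro _ (existT _ Rw h) Hh).
exists {i : I & projT1 (s i)}, (fun r => projT2 (s (tag r)) (tagged r)).
split; first by move=> [i r] /=; apply: (Hs i).1.
move=> z; split => [A [i r] /=|A i]; first exact: ((Hs i).2 z).1 (A i) r.
by apply/((Hs i).2 z) => r; exact: (A (existT (fun j => projT1 (s j)) i r)).
Qed.

Lemma sum_enum (V : finType) (F : V -> R) :
  \sum_(v : V) F v = \sum_(i < #|V|) F (enum_val i).
Proof. by rewrite -(big_enum_val F). Qed.

Definition zjoin (X V : finType) (g : X -> R) (Y : V -> R) : (X + V)%type -> R :=
  fun w => match w with inl x => g x | inr v => Y v end.

Lemma LP_of_LPdef (T : finType) (S : mat R T -> Prop) (V : finType)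
  (Phi : ((T * T * bool) + V -> R) -> Prop) :
  LPdef Phi ->
  (forall M, S M <-> Defs.hermitian M /\ exists Y : V -> R, Phi (zjoin (coords M) Y)) ->
  LP_rep S.
Proof.
move=> [Rw [h [Ha HPhi]]] HS.
have [ca Hca] := @fchoice Rw (fun _ => (R * ((T * T * bool) + V -> R))%type)
  (fun r p => forall z, h r z = p.1 + \sum_w p.2 w * z w)
  (fun r => let: ex_intro c (ex_intro a Ha) := Ha r in ex_intro _ (c, a) Ha).
exists #|Rw|, #|V|, (fun i => (ca (enum_val i)).1),
  (fun i x => (ca (enum_val i)).2 (inl x)),
  (fun i j => (ca (enum_val i)).2 (inr (enum_val j))).
move=> M; rewrite HS; split => -[Hh HY]; split => //.
- case: HY => Y HY; exists (fun j => Y (enum_val j)) => i.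
  have := (HPhi _).1 HY (enum_val i); rewrite Hca big_sumType /= addrA.
  by rewrite (sum_enum (fun v => (ca (enum_val i)).2 (inr v) * Y v)).
- case: HY => y Hy; exists (fun v => y (enum_rank v)); apply/HPhi => r.
  have := Hy (enum_rank r); rewrite enum_rankK Hca big_sumType /= addrA.
  rewrite (sum_enum (fun v => (ca r).2 (inr v) * y (enum_rank v))) /=.
  by under [X in _ -> _ <= _ + X]eq_bigr do rewrite enum_valK.
Qed.

End LP.
Section Psd.
Variable R : realType.
Local Notation C := (complex R).

Lemma sum_indl (T : finType) (x0 : T) (F : T -> C) :
  \sum_i ((i == x0)%:R * F i) = F x0.
Proof.
rewrite (bigD1 x0) //= eqxx mul1r big1 ?addr0 // => i /negbTE ->; by rewrite mul0r.
Qed.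

Lemma sum_ind2r (T : finType) (x y : T) (a b : C) (H : T -> C) :
  \sum_i H i * (a * (i == x)%:R + b * (i == y)%:R) = H x * a + H y * b.
Proof.
under eq_bigr do rewrite mulrDr.
rewrite big_split /=; congr (_ + _).
  rewrite -(sum_indl x (fun i => H i * a)); apply eq_bigr => i _; ring.
rewrite -(sum_indl y (fun i => H i * b)); apply eq_bigr => i _; ring.
Qed.

Lemma sum_ind2l (T : finType) (x y : T) (a b : C) (H : T -> C) :
  \sum_i (a * (i == x)%:R + b * (i == y)%:R) * H i = a * H x + b * H y.
Proof.
under eq_bigr do rewrite mulrC.
by rewrite sum_ind2r mulrC [H y * _]mulrC.
Qed.

Lemma qf2 (T : finType) (M : mat R T) (x y : T) (al be : C) :
  \sum_i \sum_j ((al * (i == x)%:R + be * (i == y)%:R))^* * M i j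
     * (al * (j == x)%:R + be * (j == y)%:R) =
  al^* * al * M x x + al^* * be * M x y + be^* * al * M y x + be^* * be * M y y.
Proof.
have cj : forall i, (al * (i == x)%:R + be * (i == y)%:R)^* =
    al^* * (i == x)%:R + be^* * (i == y)%:R.
  by move=> i; rewrite rmorphD !rmorphM /= !conjC_nat.
under eq_bigr => i _ do rewrite sum_ind2r cj.
rewrite big_split /= -!mulr_suml.
by rewrite !sum_ind2l; ring.
Qed.

Lemma psd_ext (T : finType) (M N : mat R T) :
  (forall x y, M x y = N x y) -> psd M -> psd N.
Proof.
move=> E H v; have := H v; congr (_ <= _); apply eq_bigr => i _; apply eq_bigr => j _.
by rewrite E.
Qed.

Lemma psd_qf2 (T : finType) (M : mat R T) (x y : T) (al be : C) : psd M ->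
  0 <= al^* * al * M x x + al^* * be * M x y + be^* * al * M y x + be^* * be * M y y.
Proof. by move=> H; rewrite -qf2; apply: H. Qed.

Lemma psd_entry (T : finType) (M : mat R T) x : psd M -> 0 <= M x x.
Proof.
move=> H; have := psd_qf2 x x 1 0 H.
by rewrite conjC1 conjC0 !(mul0r, mulr0, addr0, mul1r).
Qed.

Lemma real_conj (z : C) : 0 <= z -> z^* = z.
Proof. by move=> /ger0_real; rewrite CrealE => /eqP. Qed.

Lemma psd_herm (T : finType) (M : mat R T) x y : psd M -> M y x = (M x y)^*.
Proof.
move=> H.
have hx := real_conj (psd_entry x H); have hy := real_conj (psd_entry y H).
have q1 := real_conj (psd_qf2 x y 1 1 H).
have q2 := real_conj (psd_qf2 x y 1 'i H).
have ii : 'i^* * 'i = 1 :> C by rewrite conjCi mulNr -expr2 sqrCi opprK.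
rewrite ii in q2.
set a := M x y in q1 q2 *; set b := M y x in q1 q2 *.
have e1 : a^* + b^* = a + b.
  have h1 : a + b = (1^* * 1 * M x x + 1^* * 1 * a + 1^* * 1 * b + 1^* * 1 * M y y)
     - M x x - M y y by rewrite conjC1; ring.
  have h2 : a^* + b^* = (1^* * 1 * M x x + 1^* * 1 * a + 1^* * 1 * b + 1^* * 1 * M y y)^*
     - M x x - M y y by rewrite !rmorphD !rmorphM /= !conjC1 hx hy; ring.
  by rewrite h1 h2 q1.
have e2 : 'i * (b^* - a^*) = 'i * (a - b).
  have h1 : 'i * (a - b) = (1^* * 1 * M x x + 1^* * 'i * a + 'i^* * 1 * b + 1 * M y y)
     - M x x - M y y by rewrite conjC1 conjCi; ring.
  have h2 : 'i * (b^* - a^*) = (1^* * 1 * M x x + 1^* * 'i * a + 'i^* * 1 * b + 1 * M y y)^*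
     - M x x - M y y by rewrite !rmorphD !rmorphM /= !conjCK !conjC1 conjCi hx hy; ring.
  by rewrite h1 h2 q2.
have e3 : b^* - a^* = a - b by exact: (mulfI (@neq0Ci _) e2).
have : b^* = a.
  have two : (2%:R : C) != 0 by rewrite pnatr_eq0.
  apply: (mulfI two).
  have -> : 2%:R * b^* = (a^* + b^*) + (b^* - a^*) by ring.
  rewrite e1 e3; ring.
by move=> <-; rewrite conjCK.
Qed.

Lemma psd_bound (T : finType) (M : mat R T) x y : psd M ->
  M x x <= 1 -> M y y <= 1 -> `|M x y| <= 1.
Proof.
move=> H hxx hyy.
have hb := psd_herm x y H.
have q := psd_qf2 x y 1 (- (M x y)^*) H.
rewrite hb in q.
set a := M x y in q hb *.
have e : 1^* * 1 * M x x + 1^* * - a^* * a + (- a^*)^* * 1 * a^* + (- a^*)^* * - a^* * M y y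
   = M x x - (a * a^*) * (2%:R - M y y).
  by rewrite !rmorphN /= conjCK conjC1; ring.
rewrite e in q.
rewrite subr_ge0 in q.
have n0 : 0 <= a * a^* := mul_conjC_ge0 a.
have h2 : 1 <= 2%:R - M y y.
  by rewrite lerBrDl (_ : 2%:R = 1 + 1 :> C) ?lerD2r // -natrD.
have n1 : a * a^* <= 1.
  apply: le_trans (ler_peMr n0 h2) _; exact: le_trans q hxx.
rewrite -(@expr_le1 _ 2) //; by rewrite normCK.
Qed.

End Psd.
Section Chan.
Variable R : realType.
Local Notation C := (complex R).

Lemma sum_indr (T : finType) (x0 : T) (F : T -> C) :
  \sum_i ((x0 == i)%:R * F i) = F x0.
Proof. by under eq_bigr do rewrite eq_sym; rewrite sum_indl. Qed.

Lemma natr_and (a b : bool) : ((a && b)%:R : C) = a%:R * b%:R.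
Proof. by case: a; case: b; rewrite ?mul1r ?mul0r. Qed.

Lemma sum_unit2 (T : finType) (i j : T) (F : T -> T -> C) :
  \sum_x \sum_y ((x == i) && (y == j))%:R * F x y = F i j.
Proof.
under eq_bigr => x _ do under eq_bigr => y _ do rewrite natr_and -mulrA.
under eq_bigr => x _ do rewrite -mulr_sumr.
by rewrite sum_indl sum_indl.
Qed.

Lemma sum_pair (T1 T2 : finType) (G : T1 * T2 -> C) :
  \sum_p G p = \sum_x \sum_y G (x, y).
Proof. by rewrite pair_bigA; apply eq_bigr => -[x y]. Qed.

Variable q : party.
Local Notation dI := (sdim (pin q)).
Local Notation dO := (sdim (pout q)).
Implicit Types E : superop R 'I_dI 'I_dO.

Lemma apply_unit E i j a b :
  apply E (fun x y => ((x == i) && (y == j))%:R) a b = E i j a b.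
Proof. by rewrite /apply (sum_unit2 i j (fun x y => E x y a b)). Qed.

Lemma chan_choi_psd E : channel E ->
  psd (fun x y : 'I_dO * 'I_dI => E x.2 y.2 x.1 y.1).
Proof.
case=> cpE _ _ _.
pose Mx := fun i j : 'I_dI * 'I_dI => ((i.1 == i.2) && (j.1 == j.2))%:R : C.
have psdM : psd Mx.
  move=> v.
  have -> : \sum_i \sum_j (v i)^* * Mx i j * v j =
      (\sum_i (i.1 == i.2)%:R * v i) * (\sum_i (i.1 == i.2)%:R * v i)^*.
    rewrite mulrC rmorph_sum mulr_suml; apply eq_bigr => i _.
    rewrite mulr_sumr; apply eq_bigr => j _.
    by rewrite /Mx rmorphM /= conjC_nat natr_and; ring.
  exact: mul_conjC_ge0.
have := cpE dI Mx psdM; apply: psd_ext => -[a1 a2] [b1 b2] /=.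
rewrite /apply /ampl /Mx /=.
transitivity (\sum_(i : 'I_dI * 'I_dI) (i == (a2, a2))%:R *
   \sum_(j : 'I_dI * 'I_dI) (j == (b2, b2))%:R * E i.1 j.1 a1 b1); last first.
  by rewrite sum_indl /= sum_indl.
apply eq_bigr => -[i1 i2] _; rewrite mulr_sumr; apply eq_bigr => -[j1 j2] _ /=.
rewrite !xpair_eqE.
have [<-|ne1] := eqVneq i2 a2; last by rewrite !andbF !(mulr0, mul0r, andbF).
have [<-|ne2] := eqVneq j2 b2; last by rewrite !andbF !(mulr0, mul0r, andbF).
rewrite !andbT /= mulr1 !natr_and; ring.
Qed.

Lemma unit_density (i : 'I_dI) :
  density (fun x y : 'I_dI => ((x == i) && (y == i))%:R : C).
Proof.
split.
  move=> v.
  have -> : \sum_x \sum_y (v x)^* * ((x == i) && (y == i))%:R * v y = v i * (v i)^*.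
    rewrite [RHS]mulrC -(sum_unit2 i i (fun x y => (v x)^* * v y)).
    by apply eq_bigr => x _; apply eq_bigr => y _; ring.
  exact: mul_conjC_ge0.
by rewrite /trace (eq_bigr (fun x => (x == i)%:R * 1)) ?sum_indl // => x _;
  rewrite andbb mulr1.
Qed.

Lemma chan_tr E i : channel E -> \sum_a E i i a a = 1.
Proof.
case=> _ tpE _ _.
rewrite -(tpE _ (unit_density i)) /trace; apply eq_bigr => a _.
by rewrite apply_unit.
Qed.

Lemma chan_diag_ge0 E i a : channel E -> 0 <= E i i a a.
Proof. by move=> /chan_choi_psd /(psd_entry (a, i)). Qed.

Lemma chan_diag_le1 E i a : channel E -> E i i a a <= 1.
Proof.
move=> H; rewrite -(chan_tr i H) (bigD1 a) //= lerDl.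
by apply: sumr_ge0 => b _; apply: chan_diag_ge0.
Qed.

Lemma chan_norm E i j a b : channel E -> `|E i j a b| <= 1.
Proof.
move=> H.
have := @psd_bound _ _ _ (a, i) (b, j) (chan_choi_psd H); apply => /=; exact: chan_diag_le1.
Qed.

End Chan.
Section DchanS.
Variable R : realType.
Local Notation C := (complex R).
Variable q : party.
Local Notation dI := (sdim (pin q)).
Local Notation dO := (sdim (pout q)).

Definition Dchan (f : {ffun 'I_dI -> 'I_dO}) : superop R 'I_dI 'I_dO :=
  fun i j a b => ((i == j) && (a == b) && (f i == a))%:R.

Lemma sum_pair_ind (T1 T2 : finType) (x : T1) (G : T1 * T2 -> C) :
  \sum_p (p.1 == x)%:R * G p = \sum_y G (x, y).
Proof.
rewrite sum_pair; under eq_bigr do rewrite /= -mulr_sumr.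
by rewrite sum_indl.
Qed.

Variable f : {ffun 'I_dI -> 'I_dO}.

Lemma Dchan_ampl n (M : mat R ('I_dI * 'I_n)%type) a b :
  apply (ampl (Dchan f)) M a b =
  (a.1 == b.1)%:R * \sum_x (f x == a.1)%:R * M (x, a.2) (x, b.2).
Proof.
case: a b => a1 a2 [b1 b2] /=.
rewrite /apply /ampl sum_pair /=.
transitivity (\sum_x \sum_i2 (i2 == a2)%:R * \sum_(j : 'I_dI * 'I_n) (j == (x, b2))%:R *
   ((a1 == b1)%:R * ((f x == a1)%:R * M (x, i2) j))); last first.
  rewrite mulr_sumr; apply eq_bigr => x _; by rewrite sum_indl sum_indl.
apply eq_bigr => x _; apply eq_bigr => i2 _; rewrite mulr_sumr; apply eq_bigr => -[j1 j2] _ /=.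
rewrite /Dchan /= xpair_eqE.
have [<-|ne] := eqVneq x j1; last first.
  by rewrite /= !(mulr0, mul0r).
rewrite /=.
case: (a1 == b1); case: (f x == a1); case: (i2 == a2); case: (j2 == b2);
  by rewrite /= !(mulr0, mul0r, mulr1, mul1r).
Qed.

Lemma Dchan_cp : cp (Dchan f).
Proof.
move=> n M HM v.
pose w := fun (x : 'I_dI) (i : 'I_dI * 'I_n) => (i.1 == x)%:R * v (f x, i.2).
suff -> : \sum_a \sum_b (v a)^* * apply (ampl (Dchan f)) M a b * v b =
    \sum_x \sum_i \sum_j (w x i)^* * M i j * w x j.
  by apply: sumr_ge0 => x _; apply: HM.
have R1 : forall x, \sum_i \sum_j (w x i)^* * M i j * w x j =
    \sum_i2 \sum_j2 (v (f x, i2))^* * M (x, i2) (x, j2) * v (f x, j2).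
  move=> x.
  transitivity (\sum_(i : 'I_dI * 'I_n) (i.1 == x)%:R * \sum_(j : 'I_dI * 'I_n) (j.1 == x)%:R *
     ((v (f x, i.2))^* * M i j * v (f x, j.2))).
    apply eq_bigr => i _; rewrite mulr_sumr; apply eq_bigr => j _.
    by rewrite /w rmorphM /= conjC_nat; ring.
  rewrite sum_pair_ind; apply eq_bigr => i2 _; by rewrite sum_pair_ind.
under [RHS]eq_bigr do rewrite R1.
transitivity (\sum_(a : 'I_dO * 'I_n) \sum_b2 (v a)^* *
   (\sum_x (f x == a.1)%:R * M (x, a.2) (x, b2)) * v (a.1, b2)).
  apply eq_bigr => a _.
  rewrite -(sum_pair_ind a.1 (fun b : 'I_dO * 'I_n =>
     (v a)^* * (\sum_x (f x == a.1)%:R * M (x, a.2) (x, b.2)) * v b)).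
  apply eq_bigr => -[b1 b2] _.
  rewrite Dchan_ampl /=.
  have [->|ne] := eqVneq b1 a.1; first by rewrite /=; ring.
  by rewrite /= !(mulr0, mul0r).
transitivity (\sum_(a : 'I_dO * 'I_n) \sum_x (f x == a.1)%:R * \sum_b2 
   ((v a)^* * M (x, a.2) (x, b2) * v (a.1, b2))).
  apply eq_bigr => a _.
  transitivity (\sum_b2 \sum_x (f x == a.1)%:R *
     ((v a)^* * M (x, a.2) (x, b2) * v (a.1, b2))).
    apply eq_bigr => b2 _; rewrite mulr_sumr mulr_suml; apply eq_bigr => x _; ring.
  rewrite exchange_big; apply eq_bigr => x _; by rewrite mulr_sumr.
rewrite exchange_big; apply eq_bigr => x _.
under eq_bigr do rewrite eq_sym.
by rewrite (sum_pair_ind (f x) (fun a : 'I_dO * 'I_n => \sum_b2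
   (v a)^* * M (x, a.2) (x, b2) * v (a.1, b2))).
Qed.

Lemma Dchan_channel : channel (Dchan f).
Proof.
split.
- exact: Dchan_cp.
- move=> rho [_ <-]; rewrite /trace /apply.
  transitivity (\sum_(a : 'I_dO) \sum_(i : 'I_dI) (f i == a)%:R * rho i i).
    apply eq_bigr => a _; apply eq_bigr => i _.
    rewrite (eq_bigr (fun j => (i == j)%:R * (rho i j * (f i == a)%:R))).
      by rewrite sum_indr mulrC.
    by move=> j _; rewrite /Dchan eqxx andbT natr_and; ring.
  rewrite exchange_big; apply eq_bigr => i _.
  by rewrite -mulr_suml (eq_bigr (fun a => (f i == a)%:R * 1)) ?sum_indr ?mul1r // => a _;
    rewrite mulr1.
- move=> _ M a b ne; rewrite /apply big1 // => i _; rewrite big1 // => j _.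
  by rewrite /Dchan (negbTE ne) andbF andFb mulr0.
- move=> _ M HM a b; rewrite /apply big1 // => i _; rewrite big1 // => j _.
  have [<-|ne] := eqVneq i j; first by rewrite HM // mul0r.
  by rewrite /Dchan (negbTE ne) /= mulr0.
Qed.

End DchanS.
Section ChanA.
Variable R : realType.
Local Notation C := (complex R).
Variable q : party.
Hypothesis hv : valid_party q.
Hypothesis ho : styp (pout q) = TC \/ styp (pout q) = TI.
Hypothesis hi : styp (pin q) = TC \/ styp (pin q) = TI.
Local Notation dI := (sdim (pin q)).
Local Notation dO := (sdim (pout q)).

Lemma ord_dim1 (n : nat) (x y : 'I_n) : n = 1%N -> x = y.
Proof.
move=> e; apply/val_inj => /=.
have hx : (val x < 1)%N by rewrite -e ltn_ord.
have hy : (val y < 1)%N by rewrite -e ltn_ord.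
by move: hx hy; rewrite !ltnS !leqn0 => /eqP -> /eqP ->.
Qed.

Lemma chanA (E : superop R 'I_dI 'I_dO) : channel E ->
  forall i j a b, E i j a b = ((i == j) && (a == b))%:R * E i i a a.
Proof.
case=> _ _ co ci i j a b.
have [<-|nij] := eqVneq i j; last first.
  rewrite mul0r; case: hi => h.
    rewrite -apply_unit; apply: (ci h) => x y exy.
    rewrite exy; case: (eqVneq y i) => [->|] //=.
    by rewrite (negbTE nij).
  by case/eqP: nij; apply: ord_dim1; apply: hv.2.2.
have [<-|nab] := eqVneq a b; first by rewrite mul1r.
rewrite mul0r; case: ho => h.
  by rewrite -(apply_unit E i i a b); apply: (co h).
by case/eqP: nab; apply: ord_dim1; apply: hv.1.2.
Qed.

End ChanA.

Section Join.
Variable (N : nat) (T : 'I_N.+1 -> Type) (x0 : T ord0) (xs : forall k : 'I_N, T (lift ord0 k)).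

Definition join (k : 'I_N.+1) : T k :=
  match unliftP ord0 k with
  | UnliftSome j e => eq_rect _ T (xs j) k (esym e)
  | UnliftNone e => eq_rect _ T x0 k (esym e)
  end.

Lemma join0 : join ord0 = x0.
Proof.
rewrite /join; case: unliftP => [j e|e].
  by exfalso; move: (neq_lift ord0 j); rewrite -e eqxx.
by rewrite (eq_irrelevance (esym e) erefl).
Qed.

Lemma join_lift j : join (lift ord0 j) = xs j.
Proof.
rewrite /join; case: unliftP => [j' e|e].
  have jj := lift_inj e; subst j'.
  by rewrite (eq_irrelevance (esym e) erefl).
by exfalso; move: (neq_lift ord0 j); rewrite e eqxx.
Qed.

Lemma join_ind (P : forall k, T k -> Prop) :
  P ord0 x0 -> (forall j, P (lift ord0 j) (xs j)) -> forall k, P k (join k).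
Proof.
move=> H0 H1 k; case: (unliftP ord0 k) => [j ->|->].
  by rewrite join_lift.
by rewrite join0.
Qed.

End Join.
Section Misc.
Variable R : realType.
Local Notation C := (complex R).
Local Notation cRe := (@complex.Re _).
Local Notation cIm := (@complex.Im _).

Lemma ReD (x y : C) : cRe (x + y) = cRe x + cRe y. Proof. by case: x; case: y. Qed.
Lemma ImD (x y : C) : cIm (x + y) = cIm x + cIm y. Proof. by case: x; case: y. Qed.
Lemma Re_sum (I : finType) (F : I -> C) : cRe (\sum_i F i) = \sum_i cRe (F i).
Proof. by apply: (big_morph _ ReD). Qed.
Lemma Im_sum (I : finType) (F : I -> C) : cIm (\sum_i F i) = \sum_i cIm (F i).
Proof. by apply: (big_morph _ ImD). Qed.
Lemma ReMr (r : R) (z : C) : cRe ((r%:C)%C * z) = r * cRe z.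
Proof. by case: z => a b /=; rewrite mul0r subr0. Qed.
Lemma ImMr (r : R) (z : C) : cIm ((r%:C)%C * z) = r * cIm z.
Proof. by case: z => a b /=; rewrite mul0r addr0. Qed.
Lemma complex_ext (x y : C) : cRe x = cRe y -> cIm x = cIm y -> x = y.
Proof. by case: x => a b; case: y => c d /= -> ->. Qed.
Lemma ReJ (z : C) : cRe (z^*) = cRe z. Proof. by case: z. Qed.
Lemma ImJ (z : C) : cIm (z^*) = - cIm z. Proof. by case: z. Qed.
Lemma conj_realC (r : R) : ((r%:C)%C)^* = (r%:C)%C :> C.
Proof. by apply: complex_ext; rewrite ?ReJ ?ImJ //= oppr0. Qed.
Lemma conj_realM (r : R) (z : C) : (((r%:C)%C) * z)^* = (r%:C)%C * z^*.
Proof.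
by apply: complex_ext; rewrite ?ReJ ?ImJ ?ReMr ?ImMr ?ReJ ?ImJ // mulrN.
Qed.
Lemma conj_sum (I : finType) (F : I -> C) : (\sum_i F i)^* = \sum_i (F i)^*.
Proof. exact: rmorph_sum. Qed.
Lemma ge0_ReC (z : C) : 0 <= z -> z = ((cRe z)%:C)%C /\ 0 <= cRe z.
Proof. by case: z => a b; rewrite lecE /= => /andP[/eqP -> h]. Qed.
Lemma norm_le1_ReIm (z : C) : `|z| <= 1 -> `|cRe z| <= 1 /\ `|cIm z| <= 1.
Proof.
move=> H; split.
  by rewrite -(@lecR R); apply: le_trans (normc_ge_Re z) H.
have := normc_ge_Re (z * 'i%C); rewrite ReiNIm normrN normrM.
have -> : `|'i%C| = 1 :> C.
  by rewrite normc_def /= expr0n /= add0r expr1n sqrtr1.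
by rewrite mulr1 => h; rewrite -(@lecR R); apply: le_trans h H.
Qed.
Lemma norm_divn (x : C) (n : nat) : `|x / n%:R| <= `|x|.
Proof.
case: n => [|n]; first by rewrite invr0 mulr0 normr0 normr_ge0.
rewrite normrM normfV ler_pdivrMr ?normr_gt0 ?pnatr_eq0 // ler_peMr //.
by rewrite ger0_norm // ler1n.
Qed.
Lemma sum_enumZ (V : finType) (Z : nmodType) (F : V -> Z) :
  \sum_(v : V) F v = \sum_(i < #|V|) F (enum_val i).
Proof. by rewrite -(big_enum_val F). Qed.
Lemma sum_sig (I : finType) (J : I -> finType) (Z : nmodType) (h : {i : I & J i} -> Z) :
  \sum_l h l = \sum_i \sum_(j : J i) h (existT _ i j).
Proof.
rewrite (@sig_big_dep _ _ _ I J xpredT (fun _ => xpredT) (fun i j => h (existT _ i j))).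
by apply eq_bigr => -[i j].
Qed.
End Misc.

Section FreeFin.
Variable R : realType.
Local Notation C := (complex R).
Lemma free_fin (P : finType) (p : P -> party) (L : finType) (w : L -> R)
  (E : L -> forall k, superop R 'I_(dI p k) 'I_(dO p k)) :
  (forall l, 0 <= w l) -> \sum_l w l = 1 -> (forall l k, channel (q := p k) (E l k)) ->
  Defs.free (p := p) (fun i j a b => \sum_l ((w l)%:C)%C * tens_so (E l) i j a b).
Proof.
move=> w0 w1 Ec; exists #|L|, (fun m => w (enum_val m)), (fun m => E (enum_val m)).
split => //; first by rewrite -sum_enumZ.
apply: functional_extensionality => i; apply: functional_extensionality => j.
apply: functional_extensionality => a; apply: functional_extensionality => b.
by rewrite (sum_enumZ (fun l => ((w l)%:C)%C * tens_so (E l) i j a b)).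
Qed.
End FreeFin.
Section Distr.
Variable R : realType.
Local Notation C := (complex R).

Lemma sum_indR (T : finType) (x0 : T) (F : T -> R) :
  \sum_i F i * (i == x0)%:R = F x0.
Proof.
rewrite (bigD1 x0) //= eqxx mulr1 big1 ?addr0 // => i /negbTE ->; by rewrite mulr0.
Qed.

Variables (I J : finType) (pR : J -> I -> R).
Hypothesis pR1 : forall x, \sum_a pR a x = 1.

Lemma qsum : \sum_(f : {ffun I -> J}) \prod_x pR (f x) x = 1.
Proof.
rewrite -(bigA_distr_bigA (fun x a => pR a x)) big1 // => x _; exact: pR1.
Qed.

Lemma qmarg x0 a0 :
  \sum_(f : {ffun I -> J}) (\prod_x pR (f x) x) * (f x0 == a0)%:R = pR a0 x0.
Proof.
pose G x a := pR a x * (if x == x0 then (a == a0)%:R else 1).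
transitivity (\sum_(f : {ffun I -> J}) \prod_x G x (f x)).
  apply eq_bigr => f _; rewrite (bigD1 x0) //= [in RHS](bigD1 x0) //= /G eqxx.
  rewrite [in RHS](eq_bigr (fun x => pR (f x) x)); last first.
    by move=> x /negbTE ->; rewrite mulr1.
  by rewrite mulrAC.
rewrite -(bigA_distr_bigA G) (bigD1 x0) //= [X in _ * X]big1; last first.
  move=> x xne; rewrite /G (eq_bigr (fun a => pR a x)) ?pR1 // => a _.
  by rewrite (negbTE xne) mulr1.
by rewrite mulr1 /G (eq_bigr (fun a => pR a x0 * (a == a0)%:R)) ?sum_indR // => a _;
  rewrite eqxx.
Qed.
End Distr.
Section Bound.
Variable R : realType.
Local Notation C := (complex R).
Lemma Jfree_bound (P : finType) (q : P -> party) (s : mat R (idx (dO q) * idx (dI q))%type) :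
  Jfree (p := q) s -> forall u v, `|s u v| <= 1.
Proof.
case=> K [[n [w [E [w0 w1 Ec ->]]]] ->] u v.
rewrite /choi; apply: le_trans (norm_divn _ _) _.
apply: le_trans (ler_norm_sum _ _ _) _.
apply: (@le_trans _ _ (\sum_l ((w l)%:C)%C)).
  apply: ler_sum => l _; rewrite normrM ger0_norm ?ler0c //.
  apply: ler_piMr; first by rewrite ler0c.
  rewrite /tens_so normr_prod; apply: prodr_ile1 => k _.
  by rewrite normr_ge0 /=; apply: chan_norm.
by rewrite -rmorph_sum w1.
Qed.
End Bound.
Section Main.
Variable R : realType.
Local Notation C := (complex R).
Local Notation cRe := (@complex.Re _).
Local Notation cIm := (@complex.Im _).
Local Notation "x %:RC" := ((x%:C)%C : C) (at level 2, format "x %:RC").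

Variable N : nat.
Variable p : 'I_N.+1 -> party.
Hypothesis hvalid : forall k, valid_party (p k).
Hypothesis hAout : styp (pout (p ord0)) = TC \/ styp (pout (p ord0)) = TI.
Hypothesis hAin : styp (pin (p ord0)) = TC \/ styp (pin (p ord0)) = TI.

Local Notation pB := (fun k : 'I_N => p (lift ord0 k)).
Local Notation dX := (dI p ord0).
Local Notation dA := (dO p ord0).
Local Notation FF := {ffun 'I_dX -> 'I_dA}.
Local Notation TA := (idx (dO p) * idx (dI p))%type.
Local Notation TB := (idx (dO pB) * idx (dI pB))%type.
Local Notation SO k := (superop R 'I_(dI p k) 'I_(dO p k)).
Local Notation SOB k := (superop R 'I_(dI pB k) 'I_(dO pB k)).

Definition restI (i : idx (dI p)) : idx (dI pB) :=
  @finfun 'I_N (fun k => 'I_(dI pB k)) (fun k => i (lift ord0 k)).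
Definition restO (i : idx (dO p)) : idx (dO pB) :=
  @finfun 'I_N (fun k => 'I_(dO pB k)) (fun k => i (lift ord0 k)).
Definition restU (u : TA) : TB := (restO u.1, restI u.2).

Definition coefR (f : FF) (u v : TA) : R :=
  ((u.2 ord0 == v.2 ord0) && (u.1 ord0 == v.1 ord0) && (f (u.2 ord0) == u.1 ord0))%:R
  / dX%:R.

Lemma coefR_sym f u v : coefR f v u = coefR f u v.
Proof.
rewrite /coefR [v.2 ord0 == _]eq_sym [v.1 ord0 == _]eq_sym.
case: eqP => [->|] //=; case: eqP => [->|] //=; by rewrite andbF.
Qed.

Lemma tens_split (E : forall k, SO k) i j a b :
  tens_so E i j a b = E ord0 (i ord0) (j ord0) (a ord0) (b ord0) *
    @tens_so R _ (dI pB) (dO pB) (fun k => E (lift ord0 k)) (restI i) (restI j) (restO a) (restO b).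
Proof.
rewrite /tens_so big_ord_recl; congr (_ * _); apply eq_bigr => k _; by rewrite !ffunE.
Qed.

Lemma tens_join (x0 : SO ord0) (xs : forall k : 'I_N, SOB k) i j a b :
  tens_so (@join N (fun k => SO k) x0 xs) i j a b = x0 (i ord0) (j ord0) (a ord0) (b ord0) *
    @tens_so R _ (dI pB) (dO pB) xs (restI i) (restI j) (restO a) (restO b).
Proof.
rewrite tens_split join0; congr (_ * _); rewrite /tens_so; apply eq_bigr => k _.
by rewrite join_lift.
Qed.

Lemma choi_ext (P : finType) (q : P -> party) (K1 K2 : superop R (idx (dI q)) (idx (dO q))) :
  (forall i j a b, K1 i j a b = K2 i j a b) -> forall u v, choi K1 u v = choi K2 u v.
Proof. by move=> H u v; rewrite /choi H. Qed.

Lemma choi_decomp (L : finType) (cf : L -> FF -> R) (EB : L -> forall k : 'I_N, SOB k) (u v : TA) :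
  choi (p := p) (fun i j a b => \sum_l \sum_f (cf l f)%:RC *
     (@Dchan R (p ord0) f (i ord0) (j ord0) (a ord0) (b ord0) *
      tens_so (EB l) (restI i) (restI j) (restO a) (restO b))) u v
  = \sum_f (coefR f u v)%:RC *
     choi (p := pB) (fun i j a b => \sum_l (cf l f)%:RC * tens_so (EB l) i j a b)
       (restU u) (restU v).
Proof.
rewrite /choi /= big_ord_recl natrM exchange_big /= mulr_suml; apply eq_bigr => f _.
rewrite mulr_suml [in RHS]mulr_suml [in RHS]mulr_sumr; apply eq_bigr => l _.
rewrite /coefR /Dchan rmorphM /= fmorphV /= !rmorph_nat.
rewrite invfM; ring.
Qed.


Variables (m qq : nat) (c : 'I_m -> R) (Pm : 'I_m -> (TB * TB * bool)%type -> R)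
  (Qm : 'I_m -> 'I_qq -> R).
Hypothesis HB : forall M : mat R TB, Jfree (p := pB) M <->
  (Defs.hermitian M /\ exists y : 'I_qq -> R,
     forall r, 0 <= c r + \sum_x Pm r x * coords M x + \sum_j Qm r j * y j).

Local Notation XA := (TA * TA * bool)%type.
Local Notation XB := (TB * TB * bool)%type.
Local Notation VV := (FF * option (XB + 'I_qq))%type.
Local Notation ZZ := ((XA + VV)%type -> R).

Definition tt (z : ZZ) f := z (inr (f, None)).
Definition gg (z : ZZ) f x := z (inr (f, Some (inl x))).
Definition yy (z : ZZ) f j := z (inr (f, Some (inr j))).

Definition Phi (z : ZZ) : Prop :=
  (forall fr : FF * 'I_m, 0 <= c fr.2 * tt z fr.1 + \sum_x Pm fr.2 x * gg z fr.1 x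
                               + \sum_j Qm fr.2 j * yy z fr.1 j) /\
  (forall f, 0 <= tt z f) /\
  (forall fx : FF * XB, 0 <= tt z fx.1 - gg z fx.1 fx.2 /\ 0 <= tt z fx.1 + gg z fx.1 fx.2) /\
  (forall fuv : FF * TB * TB,
     gg z fuv.1.1 (fuv.1.2, fuv.2, true) = gg z fuv.1.1 (fuv.2, fuv.1.2, true) /\
     gg z fuv.1.1 (fuv.1.2, fuv.2, false) = - gg z fuv.1.1 (fuv.2, fuv.1.2, false)) /\
  (\sum_f tt z f = 1) /\
  (forall x : XA, z (inl x) = \sum_f coefR f x.1.1 x.1.2 * gg z f (restU x.1.1, restU x.1.2, x.2)).

Ltac aff := repeat first
  [ apply: affineD | apply: affineB | apply: affineN
  | apply: affine_sum => ?
  | apply: affineZ | apply: affine_var | apply: affine_cst ].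

Lemma LPdef_Phi : LPdef Phi.
Proof.
rewrite /Phi /tt /gg /yy.
apply: LPdef_and.
  apply: LPdef_all => fr; apply: LPdef_ge; aff.
apply: LPdef_and.
  apply: LPdef_all => f; apply: LPdef_ge; aff.
apply: LPdef_and.
  apply: LPdef_all => fx; apply: LPdef_and; apply: LPdef_ge; aff.
apply: LPdef_and.
  apply: LPdef_all => fuv; apply: LPdef_and; apply: LPdef_eq; aff.
apply: LPdef_and.
  apply: LPdef_eq; aff.
apply: LPdef_all => x; apply: LPdef_eq; aff.
Qed.

Lemma chanA_decomp (E0 : SO ord0) : channel (q := p ord0) E0 ->
  exists pR : 'I_dA -> 'I_dX -> R, (forall a x, 0 <= pR a x) /\
    (forall x, \sum_a pR a x = 1) /\
    forall i j a b, E0 i j a b = \sum_(f : FF) (\prod_x pR (f x) x)%:RC * @Dchan R (p ord0) f i j a b.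
Proof.
move=> Ec; exists (fun a x => cRe (E0 x x a a)).
have hge : forall a x, E0 x x a a = (cRe (E0 x x a a))%:RC /\ 0 <= cRe (E0 x x a a).
  by move=> a x; apply: ge0_ReC; apply: (@chan_diag_ge0 R (p ord0) E0 x a Ec).
have h1 : forall x, \sum_a cRe (E0 x x a a) = 1.
  move=> x; apply: (@complexI R); rewrite rmorph_sum rmorph1 /=.
  rewrite -(@chan_tr R (p ord0) E0 x Ec); apply eq_bigr => a _; by rewrite -(hge a x).1.
split; first by move=> a x; exact: (hge a x).2.
split => // i j a b.
rewrite (@chanA R (p ord0) (hvalid ord0) hAout hAin E0 Ec i j a b) (hge a i).1.
rewrite -(@qmarg R _ _ (fun a x => cRe (E0 x x a a)) h1 i a).
rewrite rmorph_sum mulr_sumr; apply eq_bigr => f _.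
by rewrite /Dchan !natr_and rmorphM /= rmorph_nat; ring.
Qed.

Lemma fwd J : Jfree (p := p) J ->
  Defs.hermitian J /\ exists Y : VV -> R, Phi (zjoin (coords J) Y).
Proof.
case=> K [[n [w [E [w0 w1 Ec HK]]]] ->]; subst K.
have [pR HpR] := @fchoice 'I_n (fun _ => 'I_dA -> 'I_dX -> R)
  (fun l pr => (forall a x, 0 <= pr a x) /\ (forall x, \sum_a pr a x = 1) /\
     forall i j a b, E l ord0 i j a b =
       \sum_(f : FF) (\prod_x pr (f x) x)%:RC * @Dchan R (p ord0) f i j a b)
  (fun l => chanA_decomp (Ec l ord0)).
pose qR l (f : FF) := \prod_x pR l (f x) x.
have qR0 : forall l f, 0 <= qR l f.
  by move=> l f; apply: prodr_ge0 => x _; apply: (HpR l).1.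
have qR1 : forall l, \sum_f qR l f = 1.
  by move=> l; apply: qsum; apply: (HpR l).2.1.
pose t f := \sum_l w l * qR l f.
have t0 : forall f, 0 <= t f.
  by move=> f; apply: sumr_ge0 => l _; apply: mulr_ge0.
have tsum : \sum_f t f = 1.
  rewrite /t exchange_big /=; rewrite -w1; apply eq_bigr => l _.
  by rewrite -mulr_sumr qR1 mulr1.
pose EB l := fun k : 'I_N => E l (lift ord0 k).
pose G f := choi (p := pB)
  (fun i j a b => \sum_l (w l * qR l f)%:RC * tens_so (EB l) i j a b).
have key : forall u v, choi (p := p) (fun i j a b => \sum_l (w l)%:RC * tens_so (E l) i j a b) u v
    = \sum_f (coefR f u v)%:RC * G f (restU u) (restU v).
  move=> u v; rewrite -(choi_decomp (fun l f => w l * qR l f) EB u v).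
  apply: choi_ext => i j a b.
  apply eq_bigr => l _; rewrite tens_split (HpR l).2.2 mulr_suml mulr_sumr.
  apply eq_bigr => f _; rewrite rmorphM /=; ring.
have Gcase : forall f, (t f = 0 /\ forall u v, G f u v = 0) \/
    (0 < t f /\ exists s, Jfree (p := pB) s /\ forall u v, G f u v = (t f)%:RC * s u v).
  move=> f; case: (eqVneq (t f) 0) => [t_0|t_n0]; [left|right].
    split => // u v.
    have wq0 := psumr_eq0P (fun l _ => mulr_ge0 (w0 l) (qR0 l f)) t_0.
    rewrite /G /choi big1 ?mul0r // => l _; by rewrite wq0 // rmorph0 mul0r.
  have tpos : 0 < t f by rewrite lt_def t_n0 t0.
  split => //.
  exists (choi (p := pB) (fun i j a b => \sum_l (w l * qR l f / t f)%:RC * tens_so (EB l) i j a b)).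
  split.
    eexists; split; last by reflexivity.
    apply: free_fin.
    - by move=> l; apply: divr_ge0; [apply: mulr_ge0|apply: ltW].
    - by rewrite -mulr_suml divff.
    - by move=> l k; apply: Ec.
  move=> u v; rewrite /G /choi mulrA mulr_sumr; congr (_ / _); apply eq_bigr => l _.
  by rewrite mulrA -rmorphM /= [t f * _]mulrC divfK.
have Ghm : forall f u v, G f v u = (G f u v)^*.
  move=> f u v; case: (Gcase f) => [[_ G0]|[_ [s [/HB [hs _] HG]]]].
    by rewrite !G0 rmorph0.
  by rewrite !HG hs conj_realM.
have Hg : forall f, exists gy : (XB -> R) * ('I_qq -> R),
   (forall r, 0 <= c r * t f + \sum_x Pm r x * gy.1 x + \sum_j Qm r j * gy.2 j) /\
   (forall x, 0 <= t f - gy.1 x /\ 0 <= t f + gy.1 x) /\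
   (forall u v, gy.1 (u, v, true) = gy.1 (v, u, true) /\
                gy.1 (u, v, false) = - gy.1 (v, u, false)) /\
   (forall x, gy.1 x = coords (G f) x).
  move=> f; case: (Gcase f) => [[t_0 G0]|[tpos [s [Js HG]]]].
    exists ((fun _ => 0), (fun _ => 0)); split.
      by move=> r /=; rewrite t_0 mulr0 !big1 ?addr0 // => *; rewrite mulr0.
    split; first by move=> x; rewrite t_0 subrr addr0.
    split; first by move=> u v /=; rewrite oppr0.
    by case=> [[u v] []]; rewrite /coords /= G0.
  have [hs [y Hy]] := (HB s).1 Js.
  have sb := Jfree_bound Js.
  have cb : forall x, `|coords s x| <= 1.
    by case=> [[u v] []]; rewrite /coords /=; have [h1 h2] := norm_le1_ReIm (sb u v).
  exists ((fun x => t f * coords s x), (fun j => t f * y j)); split.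
    move=> r /=; have := Hy r.
    have -> : c r * t f + \sum_x Pm r x * (t f * coords s x) + \sum_j Qm r j * (t f * y j)
       = t f * (c r + \sum_x Pm r x * coords s x + \sum_j Qm r j * y j).
      rewrite !mulrDr !mulr_sumr; congr (_ + _ + _); first by rewrite -mulr_sumr mulrC.
        by apply eq_bigr => x _; ring.
      by apply eq_bigr => j _; ring.
    by move=> h; apply: mulr_ge0 => //; apply: ltW.
  split.
    move=> x /=; have /ler_normlP [h1 h2] := cb x.
    have tp := ltW tpos; split; nra.
  split.
    move=> u v /=; rewrite /coords /= hs ReJ ImJ; split => //; ring.
  by case=> [[u v] []]; rewrite /coords /= HG ?ReMr ?ImMr.
have [gy Hgy] := @fchoice FF (fun _ => ((XB -> R) * ('I_qq -> R))%type) _ Hg.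
split.
  move=> u v; rewrite !key conj_sum; apply eq_bigr => f _.
  by rewrite coefR_sym Ghm conj_realM.
exists (fun fo : VV => match fo.2 with None => t fo.1 | Some (inl x) => (gy fo.1).1 x
                         | Some (inr j) => (gy fo.1).2 j end).
rewrite /Phi /tt /gg /yy /=.
split; first by case=> f r /=; apply: (Hgy f).1.
split; first by move=> f; apply: t0.
split; first by case=> f x /=; apply: (Hgy f).2.1.
split; first by case=> [[f u] v] /=; apply: (Hgy f).2.2.1.
split; first exact: tsum.
case=> [[u v] b] /=.
under eq_bigr => f _ do rewrite (Hgy f).2.2.2.
case: b; rewrite /coords /= key ?Re_sum ?Im_sum; apply eq_bigr => f _;
  by rewrite ?ReMr ?ImMr.
Qed.
Lemma bwd J : Defs.hermitian J -> (exists Y : VV -> R, Phi (zjoin (coords J) Y)) ->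
  Jfree (p := p) J.
Proof.
move=> hJ [Y]; rewrite /Phi /tt /gg /yy /= => -[c1 [c2 [c3 [c4 [c5 c6]]]]].
pose t f := Y (f, None).
pose g f x := Y (f, Some (inl x)).
pose yv f j := Y (f, Some (inr j)).
pose Mg f : mat R TB := fun u v => (g f (u, v, true) +i* g f (u, v, false))%C.
have Jeq : forall u v, J u v = \sum_f (coefR f u v)%:RC * Mg f (restU u) (restU v).
  move=> u v; apply: complex_ext.
    have := c6 (u, v, true); rewrite /coords /= => ->.
    by rewrite Re_sum; apply eq_bigr => f _; rewrite ReMr.
  have := c6 (u, v, false); rewrite /coords /= => ->.
  by rewrite Im_sum; apply eq_bigr => f _; rewrite ImMr.
have Mg0 : forall f, t f = 0 -> forall u v, Mg f u v = 0.
  move=> f t_0 u v.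
  have g0 : forall x, g f x = 0.
    move=> x; have [h1 h2] := c3 (f, x); rewrite /= -/(t f) t_0 in h1 h2.
    rewrite -/(g f x) in h1 h2; lra.
  by apply: complex_ext; rewrite /Mg /= !g0.
have Mgpos : forall f, 0 < t f -> exists K, Defs.free (p := pB) K /\
    forall u v, Mg f u v = (t f)%:RC * choi K u v.
  move=> f tpos.
  pose s : mat R TB := fun u v => ((t f)^-1)%:RC * Mg f u v.
  have : Jfree (p := pB) s.
    apply/HB; split.
      move=> u v; rewrite /s conj_realM; congr (_ * _).
      have [e1 e2] := c4 (f, u, v); rewrite /= -!/(g f _) in e1 e2.
      by apply: complex_ext; rewrite ?ReJ ?ImJ /Mg /= ?e1 // e2 opprK.
    exists (fun j => (t f)^-1 * yv f j) => r.
    have cs : forall x, coords s x = (t f)^-1 * g f x.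
      by case=> [[u v] []]; rewrite /coords /s ?ReMr ?ImMr.
    under eq_bigr do rewrite cs.
    have -> : c r + \sum_x Pm r x * ((t f)^-1 * g f x) + \sum_j Qm r j * ((t f)^-1 * yv f j)
       = (t f)^-1 * (c r * t f + \sum_x Pm r x * g f x + \sum_j Qm r j * yv f j).
      rewrite !mulrDr !mulr_sumr; congr (_ + _ + _).
      - by rewrite mulrCA mulVf ?mulr1 // gt_eqF.
      - by apply eq_bigr => x _; ring.
      - by apply eq_bigr => j _; ring.
    apply: mulr_ge0; first by rewrite invr_ge0 ltW.
    exact: (c1 (f, r)).
  case=> K [HK HKs]; exists K; split => // u v.
  rewrite -HKs /s mulrA -rmorphM /= mulfV ?gt_eqF // rmorph1 mul1r //.
have [fs tfs] : exists fs, 0 < t fs.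
  case: (pickP (fun f => t f != 0)) => [fs ne|none].
    by exists fs; rewrite lt_def ne c2.
  exfalso; move: c5; rewrite big1 => [|f _]; last by have := none f; move/negbFE/eqP.
  by move/eqP; rewrite eq_sym oner_eq0.
have [Kfs [HKfs _]] := Mgpos fs tfs.
have HD : forall f, exists d : {n : nat & (('I_n -> R) * ('I_n -> forall k : 'I_N, SOB k))%type},
   (forall l, 0 <= (projT2 d).1 l) /\ \sum_l (projT2 d).1 l = 1 /\
   (forall l k, channel (q := pB k) ((projT2 d).2 l k)) /\
   (0 < t f -> forall u v, Mg f u v = (t f)%:RC * choi (p := pB)
      (fun i j a b => \sum_l (((projT2 d).1 l)%:RC) * tens_so ((projT2 d).2 l) i j a b) u v).
  move=> f; case: (boolP (0 < t f)) => [tpos|tn].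
    have [K [[n [w [E [w0 w1 Ec HKE]]]] HM]] := Mgpos f tpos.
    exists (existT _ n (w, E)) => /=; do 3 (split => //).
    by move=> _ u v; rewrite HM HKE.
  have [n [w [E [w0 w1 Ec HKE]]]] := HKfs.
  exists (existT _ n (w, E)) => /=; do 3 (split => //).
  try by move=> tp; exfalso; move/negP: tn; apply.
have [dd Hdd] := @fchoice FF _ _ HD.
pose nf f := projT1 (dd f).
pose wf f : 'I_(nf f) -> R := (projT2 (dd f)).1.
pose Ef f : 'I_(nf f) -> forall k : 'I_N, SOB k := (projT2 (dd f)).2.
pose L := {f : FF & 'I_(nf f)}.
pose Eall (l : L) : forall k, SO k :=
  @join N (fun k => SO k) (@Dchan R (p ord0) (tag l)) (Ef (tag l) (tagged l)).
pose W (l : L) := t (tag l) * wf (tag l) (tagged l).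
exists (fun i j a b => \sum_(l : L) (W l)%:RC * tens_so (Eall l) i j a b); split.
  apply: free_fin.
  - by move=> l; apply: mulr_ge0; [apply: c2|apply: (Hdd (tag l)).1].
  - rewrite sum_sig -c5; apply eq_bigr => f _ /=.
    by rewrite /W /= -mulr_sumr (Hdd f).2.1 mulr1.
  - move=> l; apply: (@join_ind N (fun k => SO k) _ _ (fun k e => channel (q := p k) e)).
      exact: Dchan_channel.
    by move=> k; apply: (Hdd (tag l)).2.2.1.
apply: functional_extensionality => u; apply: functional_extensionality => v.
rewrite Jeq.
rewrite (@choi_ext _ p _ (fun i j a b => \sum_(l : L) \sum_(f : FF)
   ((f == tag l)%:R * W l)%:RC * (@Dchan R (p ord0) f (i ord0) (j ord0) (a ord0) (b ord0) *
     tens_so (Ef (tag l) (tagged l)) (restI i) (restI j) (restO a) (restO b)))); last first.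
  move=> i j a b; apply eq_bigr => l _.
  rewrite (eq_bigr (fun f => (f == tag l)%:R * ((W l)%:RC *
     (@Dchan R (p ord0) f (i ord0) (j ord0) (a ord0) (b ord0) *
     tens_so (Ef (tag l) (tagged l)) (restI i) (restI j) (restO a) (restO b))))); last first.
    by move=> f _; rewrite rmorphM /= rmorph_nat -mulrA.
  by rewrite sum_indl /Eall tens_join.
rewrite (choi_decomp (fun l f => (f == tag l)%:R * W l) (fun l => Ef (tag l) (tagged l)) u v).
apply eq_bigr => f _; congr (_ * _).
transitivity ((t f)%:RC * choi (p := pB)
   (fun i j a b => \sum_m ((wf f m)%:RC) * tens_so (Ef f m) i j a b) (restU u) (restU v)).
  case: (boolP (0 < t f)) => [tpos|tn]; first exact: (Hdd f).2.2.2 tpos _ _.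
  have t_0 : t f = 0 by apply/eqP; rewrite eq_le c2 andbT leNgt tn.
  by rewrite Mg0 // t_0 rmorph0 mul0r.
rewrite /choi mulrA mulr_sumr sum_sig; congr (_ / _).
rewrite [in RHS](bigD1 f) //= [X in _ = _ + X]big1 ?addr0; last first.
  move=> f' ne; rewrite big1 // => mm _.
  by rewrite /= eq_sym (negbTE ne) mul0r rmorph0 mul0r.
by apply eq_bigr => mm _; rewrite /= eqxx mul1r /W /= rmorphM /= mulrA.
Qed.
End Main.

Theorem proposition7 (R : realType) (N : nat) (p : 'I_N.+1 -> party)
  (hvalid : forall k, valid_party (p k))
  (hAout : styp (pout (p ord0)) = TC \/ styp (pout (p ord0)) = TI)
  (hAin : styp (pin (p ord0)) = TC \/ styp (pin (p ord0)) = TI)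
  (hB : LP_rep (@Jfree R _ (fun k : 'I_N => p (lift ord0 k)))) :
  LP_rep (@Jfree R _ p).
Proof.
case: hB => m [qq [c [Pm [Qm HB]]]].
apply: (LP_of_LPdef (@LPdef_Phi R N p m qq c Pm Qm)) => J; split.
  exact: (fwd hvalid hAout hAin HB).
by case; apply: (bwd HB).
Qed.
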